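(* Let $M$ be a duplicial module in a pre-additive category. For all $n\ge0$, $$\kappa_n=(1-b_{n+1}d_n)(1-d_{n-1}b_n)=(1-d_{n-1}b_n)(1-b_{n+1}d_n).$$
   Context: Let $\mathcal A$ be a pre-additive category. Let $\Lambda_+$ be the category with objects $[n]$, $n\ge0$, where $\Lambda_+([m],[n])$ is the set of weakly monotone $f:\mathbb Z\to\mathbb Z$ with $f(j+m+1)=f(j)+n+1$ for all $j$ and $f(0)\ge0$. Define $\varepsilon^n_i:[n-1]\to[n]$ ($n\ge1$, $0\le i\le n$) by $\varepsilon^n_i(j)=j$ for $0\le j<i$, $j+1$ for $i\le j\le n-1$, and $\eta^n_i:[n+1]\to[n]$ ($0\le i\le n+1$) by $\eta^n_i(j)=j$ for $0\le j\le i$, $j-1$ for $i<j\le n+1$. A duplicial module is a functor $M:\Lambda_+^{op}\to\mathcal A$; $M_n=M([n])$, $\partial_{n,i}=M(\varepsilon^n_i):M_n\to M_{n-1}$, $s_{n,i}=M(\eta^n_i):M_n\to M_{n+1}$. Convention $M_{-1}=0$, maps into/out of it zero. Define $b_n=\sum_{i=0}^n(-1)^i\partial_{n,i}$ ($b_0=0$), $d_n=\sum_{i=0}^{n+1}(-1)^is_{n,i}$ ($d_{-1}=0$), and the Karoubi operator $\kappa_n=(-1)^n(\partial_{n+1,0}s_{n,n+1}-s_{n-1,n}\partial_{n,0})$ (so $\kappa_0=\partial_{1,0}s_{0,1}$). *)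

(* Defs.v *)
From HB Require Import structures.
From mathcomp Require Import all_boot all_order all_algebra.
Set Implicit Arguments. Unset Strict Implicit. Unset Printing Implicit Defensive.
Import Order.TTheory GRing.Theory Num.Theory.
Local Open Scope ring_scope.

(** Pre-additive category: hom-sets are abelian groups, composition is
    bilinear. [cmp g f] is "g after f". *)
Record PreAdditive := {
  Ob : Type;
  Hom : Ob -> Ob -> zmodType;
  cmp : forall a b c : Ob, Hom b c -> Hom a b -> Hom a c;
  idm : forall a : Ob, Hom a a;
  compA : forall (a b c d : Ob) (h : Hom c d) (g : Hom b c) (f : Hom a b),
      cmp h (cmp g f) = cmp (cmp h g) f;
  comp1m : forall (a b : Ob) (f : Hom a b), cmp (idm b) f = f;
  compm1 : forall (a b : Ob) (f : Hom a b), cmp f (idm a) = f;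
  compDl : forall (a b c : Ob) (g1 g2 : Hom b c) (f : Hom a b),
      cmp (g1 + g2) f = cmp g1 f + cmp g2 f;
  compDr : forall (a b c : Ob) (g : Hom b c) (f1 f2 : Hom a b),
      cmp g (f1 + f2) = cmp g f1 + cmp g f2
}.
Arguments cmp {_ _ _ _}.
Arguments idm {_}.

(** Morphisms of Lambda_+ from [m] to [n]: weakly monotone f : Z -> Z with
    f(j+m+1) = f(j)+n+1 and f(0) >= 0. *)
Definition isLam (m n : nat) (f : int -> int) : Prop :=
  (forall x y : int, x <= y -> f x <= f y) /\
  (forall j : int, f (j + (m.+1)%:Z) = f j + (n.+1)%:Z) /\
  0 <= f 0.

(** A duplicial module: a functor Lambda_+^op -> C.  The morphism map is
    given on all functions Z -> Z, but only its values on Lambda_+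
    morphisms matter (functor laws are required only there). *)
Record Duplicial (C : PreAdditive) := {
  Mo : nat -> Ob C;
  Mf : forall m n : nat, (int -> int) -> @Hom C (Mo n) (Mo m);
  Mf_id : forall n : nat, Mf n n id = idm (Mo n);
  Mf_comp : forall (m n p : nat) (f g : int -> int),
      isLam m n f -> isLam n p g -> Mf m p (g \o f) = cmp (Mf m n f) (Mf n p g)
}.
Arguments Mo {_}.
Arguments Mf {_}.

(** epsilon^n_i : [n-1] -> [n] (n >= 1), extended periodically to Z. *)
Definition eps (n i : nat) (j : int) : int :=
  let r := (j %% n%:Z)%Z in
  (j %/ n%:Z)%Z * (n.+1)%:Z + (if r < i%:Z then r else r + 1).

(** eta^n_i : [n+1] -> [n], extended periodically to Z. *)
Definition eta (n i : nat) (j : int) : int :=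
  let r := (j %% (n.+2)%:Z)%Z in
  (j %/ (n.+2)%:Z)%Z * (n.+1)%:Z + (if r <= i%:Z then r else r - 1).

Section Ops.
Variables (C : PreAdditive) (M : Duplicial C).

Definition face (n i : nat) : @Hom C (Mo M n.+1) (Mo M n) := Mf M n n.+1 (eps n.+1 i).
Definition degen (n i : nat) : @Hom C (Mo M n) (Mo M n.+1) := Mf M n.+1 n (eta n i).

(** bb n = b_{n+1} : M_{n+1} -> M_n *)
Definition bb (n : nat) : @Hom C (Mo M n.+1) (Mo M n) :=
  \sum_(i < n.+2) face n i *~ ((-1) ^+ i).
Definition dd (n : nat) : @Hom C (Mo M n) (Mo M n.+1) :=
  \sum_(i < n.+2) degen n i *~ ((-1) ^+ i).

Definition bd (n : nat) : @Hom C (Mo M n) (Mo M n) := cmp (bb n) (dd n).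
(** d_{n-1} b_n : M_n -> M_n  (zero for n = 0, since M_{-1} = 0) *)
Definition db (n : nat) : @Hom C (Mo M n) (Mo M n) :=
  match n with 0 => 0 | k.+1 => cmp (dd k) (bb k) end.

Definition sface (n : nat) : @Hom C (Mo M n) (Mo M n) :=
  match n with 0 => 0 | k.+1 => cmp (degen k k.+1) (face k 0) end.

Definition kappa (n : nat) : @Hom C (Mo M n) (Mo M n) :=
  (cmp (face n 0) (degen n n.+1) - sface n) *~ ((-1) ^+ n).

End Ops.

(* Main.v *)
Require Import Defs.
From mathcomp Require Import all_boot all_order all_algebra.
From mathcomp Require Import zify ring.
From Stdlib Require Import FunctionalExtensionality.
Import Order.TTheory GRing.Theory Num.Theory.
Local Open Scope ring_scope.

Section Cat.
Variable C : PreAdditive.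

Lemma cmp0l (a b c : Ob C) (f : Defs.Hom a b) : cmp (0 : Defs.Hom b c) f = 0.
Proof. apply: (addrI (cmp (0 : Defs.Hom b c) f)); by rewrite -compDl !addr0. Qed.
Lemma cmp0r (a b c : Ob C) (g : Defs.Hom b c) : cmp g (0 : Defs.Hom a b) = 0.
Proof. apply: (addrI (cmp g (0 : Defs.Hom a b))); by rewrite -compDr !addr0. Qed.
Lemma cmpNl (a b c : Ob C) (g : Defs.Hom b c) (f : Defs.Hom a b) : cmp (- g) f = - cmp g f.
Proof. apply: (addrI (cmp g f)); by rewrite -compDl !subrr cmp0l. Qed.
Lemma cmpNr (a b c : Ob C) (g : Defs.Hom b c) (f : Defs.Hom a b) : cmp g (- f) = - cmp g f.
Proof. apply: (addrI (cmp g f)); by rewrite -compDr !subrr cmp0r. Qed.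
Lemma cmpBl (a b c : Ob C) (g1 g2 : Defs.Hom b c) (f : Defs.Hom a b) :
  cmp (g1 - g2) f = cmp g1 f - cmp g2 f.
Proof. by rewrite compDl cmpNl. Qed.
Lemma cmpBr (a b c : Ob C) (g : Defs.Hom b c) (f1 f2 : Defs.Hom a b) :
  cmp g (f1 - f2) = cmp g f1 - cmp g f2.
Proof. by rewrite compDr cmpNr. Qed.
Lemma cmp_suml (a b c : Ob C) I (r : seq I) (P : pred I) (F : I -> Defs.Hom b c) (f : Defs.Hom a b) :
  cmp (\sum_(i <- r | P i) F i) f = \sum_(i <- r | P i) cmp (F i) f.
Proof.
apply: (big_ind2 (fun x y => cmp x f = y)); first exact: cmp0l.
  by move=> x1 x2 y1 y2 <- <-; rewrite compDl.
by [].
Qed.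
Lemma cmp_sumr (a b c : Ob C) I (r : seq I) (P : pred I) (F : I -> Defs.Hom a b) (g : Defs.Hom b c) :
  cmp g (\sum_(i <- r | P i) F i) = \sum_(i <- r | P i) cmp g (F i).
Proof.
apply: (big_ind2 (fun x y => cmp g x = y)); first exact: cmp0r.
  by move=> x1 x2 y1 y2 <- <-; rewrite compDr.
by [].
Qed.
Lemma cmpMzl (a b c : Ob C) (g : Defs.Hom b c) (f : Defs.Hom a b) (z : int) :
  cmp (g *~ z) f = cmp g f *~ z.
Proof.
have H k : cmp (g *+ k) f = cmp g f *+ k.
  by elim: k => [|k IH]; rewrite ?cmp0l // !mulrS compDl IH.
case: z => k; first by rewrite -!pmulrn H.
by rewrite NegzE !mulrNz cmpNl -!pmulrn H.
Qed.
Lemma cmpMzr (a b c : Ob C) (g : Defs.Hom b c) (f : Defs.Hom a b) (z : int) :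
  cmp g (f *~ z) = cmp g f *~ z.
Proof.
have H k : cmp g (f *+ k) = cmp g f *+ k.
  by elim: k => [|k IH]; rewrite ?cmp0r // !mulrS compDr IH.
case: z => k; first by rewrite -!pmulrn H.
by rewrite NegzE !mulrNz cmpNr -!pmulrn H.
Qed.

Definition sg (i : nat) : int := (-1) ^+ i.

Lemma expand (a b c : Ob C) (A B : nat) (F : nat -> Defs.Hom b c) (G : nat -> Defs.Hom a b) :
  cmp (\sum_(i < A) F i *~ sg i) (\sum_(j < B) G j *~ sg j) =
  \sum_(i < A) \sum_(j < B) cmp (F i) (G j) *~ sg (i + j).
Proof.
rewrite cmp_suml; apply: eq_bigr => i _; rewrite cmpMzl cmp_sumr.
rewrite mulrz_suml; apply: eq_bigr => j _.
by rewrite cmpMzr -mulrzA /sg exprD mulrC.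
Qed.
End Cat.


Section Per.
Variables (f : int -> int) (M P : int).
Hypothesis Hf : forall j, f (j + M) = f j + P.

Lemma per_nat x (k : nat) : f (x + k%:Z * M) = f x + k%:Z * P.
Proof.
elim: k => [|k IH]; first by rewrite !mul0r !addr0.
by rewrite -addn1 PoszD !mulrDl !mul1r addrA Hf IH addrA.
Qed.

Lemma per_int x (q : int) : f (x + q * M) = f x + q * P.
Proof.
case: q => k; first exact: per_nat.
have := per_nat (x + Negz k * M) k.+1.
rewrite NegzE !mulNr subrK => ->.
by rewrite addrK.
Qed.
End Per.
Arguments per_int {f M P} Hf x q.
Arguments per_nat {f M P} Hf x k.

Lemma ext_per (f g : int -> int) (m : nat) (P : int) :
  (forall j, f (j + m.+1%:Z) = f j + P) -> (forall j, g (j + m.+1%:Z) = g j + P) ->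
  (forall k : nat, (k <= m)%N -> f k%:Z = g k%:Z) -> f = g.
Proof.
move=> Hf Hg H; apply: functional_extensionality => x.
rewrite (divz_eq x m.+1%:Z) addrC (per_int Hf) (per_int Hg).
have r0 : 0 <= (x %% m.+1%:Z)%Z by apply: modz_ge0.
have r1 : (x %% m.+1%:Z)%Z < m.+1%:Z by apply: ltz_pmod.
have [k ek] : exists k : nat, (x %% m.+1%:Z)%Z = k%:Z.
  by exists `|(x %% m.+1%:Z)%Z|%N; rewrite abszE ger0_norm.
rewrite ek H //; lia.
Qed.

Lemma lamP (m n : nat) (f : int -> int) :
  (forall j, f (j + m.+1%:Z) = f j + n.+1%:Z) -> 0 <= f 0 ->
  (forall k : nat, (k <= m)%N -> f k%:Z <= f k.+1%:Z) -> isLam m n f.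
Proof.
move=> Hf H0 Hs; split; last by split.
have step x : f x <= f (x + 1).
  have r0 : 0 <= (x %% m.+1%:Z)%Z by apply: modz_ge0.
  have r1 : (x %% m.+1%:Z)%Z < m.+1%:Z by apply: ltz_pmod.
  have [k ek] : exists k : nat, (x %% m.+1%:Z)%Z = k%:Z.
    by exists `|(x %% m.+1%:Z)%Z|%N; rewrite abszE ger0_norm.
  have ex : x = k%:Z + (x %/ m.+1%:Z)%Z * m.+1%:Z by rewrite -ek addrC -divz_eq.
  have ex1 : x + 1 = k.+1%:Z + (x %/ m.+1%:Z)%Z * m.+1%:Z.
    by rewrite {1}ex -addn1 PoszD; ring.
  rewrite ex1 {1}ex !(per_int Hf) lerD2r; apply: Hs; lia.
move=> x y lexy.
have [k ->] : exists k : nat, y = x + k%:Z.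
  by exists `|y - x|%N; rewrite abszE ger0_norm ?subr_ge0 // ; ring.
elim: k => [|k IH]; first by rewrite addr0.
apply: (le_trans IH); rewrite -addn1 PoszD addrA; exact: step.
Qed.

Lemma eps_per (N i : nat) j : (0 < N)%N -> eps N i (j + N%:Z) = eps N i j + N.+1%:Z.
Proof.
move=> N0; rewrite /eps.
have e : j + N%:Z = 1 * N%:Z + j by rewrite mul1r addrC.
rewrite e divzMDl; last by rewrite eqz_nat -lt0n.
rewrite modzMDl; ring.
Qed.

Lemma eta_per (N i : nat) j : eta N i (j + N.+2%:Z) = eta N i j + N.+1%:Z.
Proof.
rewrite /eta.
have e : j + N.+2%:Z = 1 * N.+2%:Z + j by rewrite mul1r addrC.
rewrite e divzMDl // modzMDl; ring.
Qed.

Lemma epsE (N i k : nat) : (0 < N)%N -> (k <= N)%N ->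
  eps N i k%:Z = (if (k < N)%N then (if (k < i)%N then k else k.+1)
                  else N.+1 + (if (0 < i)%N then 0 else 1))%N%:Z.
Proof.
move=> N0 kN; case: ltnP => kN'.
  rewrite /eps divz_small ?modz_small; try lia.
  by rewrite mul0r add0r ltz_nat; case: ltnP => h; lia.
have -> : k = N by lia.
rewrite -[N%:Z]add0r eps_per // /eps divz_small ?modz_small; try lia.
by rewrite mul0r add0r ltz_nat; case: ltnP => h; lia.
Qed.

Lemma etaE (N i k : nat) : (k <= N.+2)%N ->
  eta N i k%:Z = (if (k < N.+2)%N then (if (k <= i)%N then k else k - 1) else N.+1)%N%:Z.
Proof.
move=> kN; case: ltnP => kN'.
  rewrite /eta divz_small ?modz_small; try lia.
  by rewrite mul0r add0r lez_nat; case: leqP => h; lia.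
have -> : k = N.+2 by lia.
rewrite -[N.+2%:Z]add0r eta_per // /eta divz_small ?modz_small; try lia.
all: try by rewrite mul0r add0r lez_nat; case: leqP => h; lia.
Qed.


Ltac destr := repeat match goal with |- context [if ?b then _ else _] =>
  lazymatch b with
  | context [if _ then _ else _] => fail
  | true => fail | false => fail
  | _ => case: (boolP b) => ?; cbv iota end end.

Lemma lam_eps n i : (i <= n.+1)%N -> isLam n n.+1 (eps n.+1 i).
Proof.
move=> hi; apply: lamP.
- by move=> j; apply: eps_per.
- rewrite -[0]/(Posz 0) epsE //; destr; lia.
- move=> k hk; rewrite !epsE //; destr; lia.
Qed.

Lemma lam_eta n i : (i <= n.+1)%N -> isLam n.+1 n (eta n i).
Proof.
move=> hi; apply: lamP.
- by move=> j; apply: eta_per.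
- rewrite -[0]/(Posz 0) etaE //; destr; lia.
- move=> k hk; rewrite !etaE //; destr; lia.
Qed.

Ltac evals := rewrite ?epsE ?etaE; try lia; rewrite ?epsE ?etaE; try lia;
  rewrite ?epsE ?etaE; try lia.

Ltac fin := try (congr Posz); destr; try lia.

Lemma I1 n i j : (i < j)%N -> (j <= n.+2)%N ->
  eps n.+2 j \o eps n.+1 i = eps n.+2 i \o eps n.+1 j.-1.
Proof.
move=> h1 h2; apply: (@ext_per _ _ n (n.+3%:Z)).
- by move=> x /=; rewrite !eps_per.
- by move=> x /=; rewrite !eps_per.
- move=> k hk /=; rewrite !epsE //; try lia.
  all: try (congr Posz); destr; try lia.
Qed.

Lemma I2 n i j : (i <= j)%N -> (j <= n.+1)%N ->
  eta n j \o eta n.+1 i = eta n i \o eta n.+1 j.+1.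
Proof.
move=> h1 h2; apply: (@ext_per _ _ n.+2 (n.+1%:Z)).
- by move=> x /=; rewrite !eta_per.
- by move=> x /=; rewrite !eta_per.
- move=> k hk /=; rewrite !etaE //; try lia.
  all: try (congr Posz); destr; try lia.
Qed.

Lemma I3a n i : (i <= n.+1)%N -> eta n i \o eps n.+1 i = id.
Proof.
move=> h1; apply: (@ext_per _ _ n (n.+1%:Z)).
- by move=> x /=; rewrite eps_per // eta_per.
- by [].
- move=> k hk /=; rewrite !epsE //; try lia; rewrite !etaE //; try lia.
  all: try (congr Posz); destr; try lia.
Qed.

Lemma I3b n i : (i <= n)%N -> eta n i \o eps n.+1 i.+1 = id.
Proof.
move=> h1; apply: (@ext_per _ _ n (n.+1%:Z)).
- by move=> x /=; rewrite eps_per // eta_per.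
- by [].
- move=> k hk /=; rewrite !epsE //; try lia; rewrite !etaE //; try lia.
  all: try (congr Posz); destr; try lia.
Qed.

Lemma H2 m i j : (i < j)%N -> (j <= m.+2)%N -> (0 < i)%N || (j < m.+2)%N ->
  eta m.+1 j \o eps m.+2 i = eps m.+1 i \o eta m j.-1.
Proof.
move=> h1 h2 h3; apply: (@ext_per _ _ m.+1 (m.+2%:Z)).
- by move=> x /=; rewrite eps_per // eta_per.
- by move=> x /=; rewrite eta_per eps_per.
- move=> k hk /=; rewrite !epsE //; try lia; rewrite !etaE //; try lia.
  all: try (rewrite !epsE //; try lia).
  all: try (congr Posz); destr; try lia.
Qed.

Lemma H3 m i j : (j.+1 < i)%N -> (i <= m.+2)%N ->
  eta m.+1 j \o eps m.+2 i = eps m.+1 i.-1 \o eta m j.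
Proof.
move=> h1 h2; apply: (@ext_per _ _ m.+1 (m.+2%:Z)).
- by move=> x /=; rewrite eps_per // eta_per.
- by move=> x /=; rewrite eta_per eps_per.
- move=> k hk /=; rewrite !epsE //; try lia; rewrite !etaE //; try lia.
  all: try (rewrite !epsE //; try lia).
  all: try (congr Posz); destr; try lia.
Qed.


Section Fun.
Variables (C : PreAdditive) (M : Duplicial C).

Ltac lams := rewrite /face /degen -!Mf_comp;
  try (apply: lam_eps; lia); try (apply: lam_eta; lia).

Lemma ffE n i j : (i < j)%N -> (j <= n.+2)%N ->
  cmp (face M n i) (face M n.+1 j) = cmp (face M n j.-1) (face M n.+1 i).
Proof. move=> h1 h2; lams; by rewrite I1. Qed.

Lemma ssE n i j : (i <= j)%N -> (j <= n.+1)%N ->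
  cmp (degen M n.+1 i) (degen M n j) = cmp (degen M n.+1 j.+1) (degen M n i).
Proof. move=> h1 h2; lams; by rewrite I2. Qed.

Lemma fsE1 n i : (i <= n.+1)%N -> cmp (face M n i) (degen M n i) = idm (Mo M n).
Proof. move=> h1; lams; rewrite I3a //; exact: (Mf_id M n). Qed.

Lemma fsE2 n i : (i <= n)%N -> cmp (face M n i.+1) (degen M n i) = idm (Mo M n).
Proof. move=> h1; lams; rewrite I3b //; exact: (Mf_id M n). Qed.

Lemma fsE3 m i j : (i < j)%N -> (j <= m.+2)%N -> (0 < i)%N || (j < m.+2)%N ->
  cmp (face M m.+1 i) (degen M m.+1 j) = cmp (degen M m j.-1) (face M m i).
Proof. move=> h1 h2 h3; lams; by rewrite H2. Qed.

Lemma fsE4 m i j : (j.+1 < i)%N -> (i <= m.+2)%N ->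
  cmp (face M m.+1 i) (degen M m.+1 j) = cmp (degen M m j) (face M m i.-1).
Proof. move=> h1 h2; lams; by rewrite H3. Qed.
End Fun.


Section Sums.
Variable V : zmodType.

Lemma sq_rec (F : nat -> nat -> V) N :
  \sum_(i < N.+1) \sum_(j < N.+1) F i j =
  \sum_(i < N) \sum_(j < N) F i j + ((\sum_(j < N) F N j + \sum_(i < N) F i N) + F N N).
Proof.
rewrite big_ord_recr /=.
under eq_bigr => i _ do rewrite big_ord_recr /=.
rewrite big_split /= big_ord_recr /=.
by rewrite -!addrA; congr (_ + _); rewrite addrCA addrA.
Qed.

Lemma rect_rec (F : nat -> nat -> V) N :
  \sum_(i < N.+1) \sum_(j < N.+2) F i j =
  \sum_(i < N) \sum_(j < N.+1) F i j + (\sum_(i < N) F i N.+1 + \sum_(j < N.+2) F N j).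
Proof.
rewrite big_ord_recr /=.
under eq_bigr => i _ do rewrite big_ord_recr /=.
by rewrite big_split /= -!addrA.
Qed.

Lemma cancel_sum (F : nat -> nat -> V) N :
  (forall i j, (i < j)%N -> (j <= N)%N -> F i j = - F j.-1 i) ->
  \sum_(i < N) \sum_(j < N.+1) F i j = 0.
Proof.
elim: N => [|N IH] H; first by rewrite big_ord0.
rewrite rect_rec IH; last by move=> i j h1 h2; apply: H => //; lia.
rewrite add0r.
have -> : \sum_(i < N) F i N.+1 = - \sum_(i < N) F N i.
  by rewrite -sumrN; apply: eq_bigr => i _; have := ltn_ord i; move=> hi; rewrite H //=; lia.
rewrite !big_ord_recr /= (H N N.+1) //=.
by rewrite addrK addNr.
Qed.

Definition sgn (i : nat) : int := (-1) ^+ i.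

Lemma sgnS i : sgn i.+1 = - sgn i.
Proof. by rewrite /sgn exprS mulN1r. Qed.

Lemma sgn_double i : sgn (i + i) = 1.
Proof. by rewrite /sgn -signr_odd addnn odd_double. Qed.

Definition cdef (u : V) (d : nat -> nat -> V) (i j : nat) : V :=
  if (i == j) || (i == j.+1) then u else if (i < j)%N then d i j.-1 else d i.-1 j.

Lemma gen_sum (u : V) (d : nat -> nat -> V) K :
  \sum_(i < K.+1) \sum_(j < K.+1) cdef u d i j *~ sgn (i + j) +
  \sum_(i < K) \sum_(j < K) d i j *~ sgn (i + j) = u.
Proof.
elim: K => [|K IH].
  by rewrite !big_ord1 big_ord0 /cdef /= addr0.
rewrite (sq_rec (fun i j => cdef u d i j *~ sgn (i + j))) (sq_rec (fun i j => d i j *~ sgn (i + j))) addrACA IH.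
set A := \sum_(j < K) d K j *~ sgn (K + j).
set B := \sum_(i < K) d i K *~ sgn (i + K).
set e := d K K *~ sgn (K + K).
have -> : \sum_(j < K.+1) cdef u d K.+1 j *~ sgn (K.+1 + j) = - A - u.
  rewrite big_ord_recr /= /cdef eqxx orbT addSn sgnS sgn_double -sumrN.
  congr (_ + _).
  apply: eq_bigr => j _; rewrite addSn sgnS mulrNz.
  have h := ltn_ord j.
  have -> : (K.+1 == j) = false by apply/negbTE; lia.
  have -> : (K.+1 == j.+1) = false by apply/negbTE; lia.
  have -> : (K.+1 < j)%N = false by apply/negbTE; lia.
  by [].
have -> : \sum_(i < K.+1) cdef u d i K.+1 *~ sgn (i + K.+1) = - B - e.
  rewrite big_ord_recr /= /cdef -sumrN.
  have -> : (K == K.+1) = false by apply/negbTE; lia.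
  have -> : (K == K.+2) = false by apply/negbTE; lia.
  rewrite ltnSn /= addnS sgnS mulrNz; congr (_ + _).
  apply: eq_bigr => i _; rewrite addnS sgnS mulrNz.
  have h := ltn_ord i.
  have -> : (nat_of_ord i == K.+1) = false by apply/negbTE; lia.
  have -> : (nat_of_ord i == K.+2) = false by apply/negbTE; lia.
  by rewrite /= (ltn_trans h (ltnSn K)).
rewrite /cdef eqxx /= sgn_double mulr1z.
rewrite -[RHS]addr0; congr (_ + _).
apply/eqP; rewrite addr_eq0 addrAC subrK.
by rewrite !opprD addrA.
Qed.

Lemma sum_except (c c' : nat -> nat -> V) K :
  (forall i j, (i <= K)%N -> (j <= K)%N -> ~~ ((i == 0%N) && (j == K)) -> c i j = c' i j) ->
  \sum_(i < K.+1) \sum_(j < K.+1) c i j *~ sgn (i + j) =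
  \sum_(i < K.+1) \sum_(j < K.+1) c' i j *~ sgn (i + j) + (c 0%N K - c' 0%N K) *~ sgn K.
Proof.
move=> H; rewrite [in LHS]big_ord_recl [in RHS]big_ord_recl /=.
have -> : \sum_(i < K) \sum_(j < K.+1) c (lift ord0 i) j *~ sgn (lift ord0 i + j) =
          \sum_(i < K) \sum_(j < K.+1) c' (lift ord0 i) j *~ sgn (lift ord0 i + j).
  apply: eq_bigr => i _; apply: eq_bigr => j _; rewrite H //; rewrite ?lift0.
  - by have := ltn_ord i.
  - by have := ltn_ord j; rewrite ltnS.
rewrite [in LHS]big_ord_recr [in RHS]big_ord_recr /=.
have -> : \sum_(i < K) c 0%N i *~ sgn (0 + i) = \sum_(i < K) c' 0%N i *~ sgn (0 + i).
  apply: eq_bigr => j _; have hj := ltn_ord j; rewrite H //=; first exact: ltnW.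
  by rewrite neq_ltn hj.
rewrite add0n mulrzBl; set a := \sum_(i < K) _; set b := \sum_(i < K) _.
set p := c 0%N K *~ sgn K; set q := c' 0%N K *~ sgn K.
by rewrite (addrAC a q b) -(addrA (a + b)) (addrC q) subrK addrAC.
Qed.
End Sums.


Section Main.
Variables (C : PreAdditive) (M : Duplicial C).

Lemma bb_bb n : cmp (bb M n) (bb M n.+1) = 0.
Proof.
rewrite /bb (@expand _ _ _ _ _ _ (fun i => face M n i) (fun j => face M n.+1 j)).
apply: (@cancel_sum _ (fun i j => cmp (face M n i) (face M n.+1 j) *~ sgn (i + j)) n.+2).
move=> i j h1 h2 /=; rewrite ffE //.
have -> : (i + j = (j.-1 + i).+1)%N by lia.
by rewrite sgnS mulrNz.
Qed.

Lemma dd_dd n : cmp (dd M n.+1) (dd M n) = 0.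
Proof.
rewrite /dd (@expand _ _ _ _ _ _ (fun i => degen M n.+1 i) (fun j => degen M n j)) exchange_big /=.
apply: (@cancel_sum _ (fun a b => cmp (degen M n.+1 b) (degen M n a) *~ sgn (b + a)) n.+2).
move=> a b h1 h2 /=.
rewrite (@ssE _ M n a b.-1); try lia.
have -> : b.-1.+1 = b by lia.
have -> : (b + a = (a + b.-1).+1)%N by lia.
by rewrite sgnS mulrNz.
Qed.

Definition dfun (n : nat) : nat -> nat -> Defs.Hom (Mo M n) (Mo M n) :=
  match n return nat -> nat -> Defs.Hom (Mo M n) (Mo M n) with
  | 0 => fun _ _ => 0
  | m.+1 => fun i j => cmp (degen M m j) (face M m i)
  end.

Lemma db_sum n : db M n = \sum_(i < n.+1) \sum_(j < n.+1) dfun n i j *~ sgn (i + j).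
Proof.
case: n => [|m].
  by rewrite /= !big_ord1 mul0rz.
rewrite /db /dd /bb (@expand _ _ _ _ _ _ (fun i => degen M m i) (fun j => face M m j)).
rewrite exchange_big /=; apply: eq_bigr => i _; apply: eq_bigr => j _.
by rewrite addnC.
Qed.

Lemma bd_sum n : bd M n =
  \sum_(i < n.+2) \sum_(j < n.+2) cmp (face M n i) (degen M n j) *~ sgn (i + j).
Proof. by rewrite /bd /dd /bb (@expand _ _ _ _ _ _ (fun i => face M n i) (fun j => degen M n j)). Qed.

Lemma bd_db n : bd M n + db M n = idm (Mo M n) - kappa M n.
Proof.
rewrite bd_sum db_sum (@sum_except _ (fun i j => cmp (face M n i) (degen M n j))
  (@cdef _ (idm (Mo M n)) (dfun n)) n.+1).
  rewrite addrAC gen_sum /cdef /=.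
  rewrite /kappa; have -> : sface M n = dfun n 0 n by case: n.
  by rewrite sgnS mulrNz.
move=> i j hi hj hne /=; rewrite /cdef.
case: (boolP ((i == j) || (i == j.+1))) => [/orP [/eqP -> | /eqP e] | h].
- by rewrite fsE1.
- by rewrite e fsE2 //; lia.
case: ltnP => h2.
  case: n hi hj hne => [|m] hi hj hne; first by exfalso; lia.
  rewrite fsE3 //; lia.
case: n hi hj hne => [|m] hi hj hne; first by exfalso; lia.
rewrite fsE4 //; lia.
Qed.
End Main.


Theorem mainTheorem10 (C : PreAdditive) (M : Duplicial C) (n : nat) :
  kappa M n = cmp (idm (Mo M n) - bd M n) (idm (Mo M n) - db M n) /\
  kappa M n = cmp (idm (Mo M n) - db M n) (idm (Mo M n) - bd M n).
Proof.
have E := bd_db _ M n.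
have K : kappa M n = idm (Mo M n) - (bd M n + db M n).
  by rewrite E opprB addrC subrK.
have Z1 : cmp (bd M n) (db M n) = 0.
  case: n {E K} => [|m] /=; first exact: cmp0r.
  by rewrite /bd -Defs.compA (Defs.compA (dd M m.+1)) dd_dd cmp0l cmp0r.
have Z2 : cmp (db M n) (bd M n) = 0.
  case: n {E K Z1} => [|m] /=; first exact: cmp0l.
  by rewrite /bd -Defs.compA (Defs.compA (bb M m)) bb_bb cmp0l cmp0r.
split; rewrite K cmpBl !cmpBr comp1m compm1 ?Z1 ?Z2 comp1m subr0 opprD addrA //.
by rewrite addrAC.
Qed.
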